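(* For every variety $\mathbf{V}$ of finite monoids, the class $\mathbf{M}_e\mathbf{V}=\{M \text{ finite monoid}: eM_ee\in\mathbf{V}\text{ for all idempotents } e\in M\}$ is a variety of finite monoids.
   Context: A variety of finite monoids is a class of finite monoids closed under finite direct products, submonoids and quotients (homomorphic images). For a finite monoid $M$, write $m_1\le_{\mathcal J}m_2$ if $m_1=sm_2t$ for some $s,t\in M$. An idempotent is $e\in M$ with $e^2=e$. For an idempotent $e$, $M_e$ denotes the submonoid of $M$ generated by all elements $m$ with $e\le_{\mathcal J}m$, and $eM_ee=\{ese: s\in M_e\}$, which is a monoid with identity $e$. *)

(* Defs.v *)
From mathcomp Require Import all_boot.
Set Implicit Arguments. Unset Strict Implicit. Unset Printing Implicit Defensive.

Record finMonoid := FinMonoid {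
  carrier :> finType;
  mmul : carrier -> carrier -> carrier;
  mone : carrier;
  mmulA : forall x y z, mmul x (mmul y z) = mmul (mmul x y) z;
  mmul1m : forall x, mmul mone x = x;
  mmulm1 : forall x, mmul x mone = x }.

Arguments mmul {_}.
Arguments mone {_}.

Definition is_mhom (M N : finMonoid) (f : M -> N) :=
  f mone = mone /\ forall x y, f (mmul x y) = mmul (f x) (f y).

Section Prod.
Variables M N : finMonoid.
Definition pmul (a b : M * N) : M * N := (mmul a.1 b.1, mmul a.2 b.2).
Lemma pmulA x y z : pmul x (pmul y z) = pmul (pmul x y) z.
Proof. by rewrite /pmul /= !mmulA. Qed.
Lemma pmul1m x : pmul (mone, mone) x = x.
Proof. by case: x => a b; rewrite /pmul /= !mmul1m. Qed.
Lemma pmulm1 x : pmul x (mone, mone) = x.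
Proof. by case: x => a b; rewrite /pmul /= !mmulm1. Qed.
Definition prodMonoid : finMonoid :=
  @FinMonoid (M * N)%type pmul (mone, mone) pmulA pmul1m pmulm1.
End Prod.

Lemma unit_eq (x : unit) : tt = x. Proof. by case: x. Qed.
Definition trivMonoid : finMonoid :=
  @FinMonoid unit (fun _ _ => tt) tt (fun _ _ _ => erefl) unit_eq unit_eq.

Definition is_submonoid (M : finMonoid) (S : {set M}) :=
  (mone \in S) && [forall x in S, forall y in S, mmul x y \in S].

Section SubMonoid.
Variables (M : finMonoid) (S : {set M}) (HS : is_submonoid S).
Lemma sub_one : mone \in S. Proof. by case/andP: HS. Qed.
Lemma sub_mul x y : x \in S -> y \in S -> mmul x y \in S.
Proof. by case/andP: HS => _ /forall_inP H xS yS; move/forall_inP: (H x xS) => /(_ y yS). Qed.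
Definition smul (a b : {x | x \in S}) : {x | x \in S} :=
  exist _ (mmul (sval a) (sval b)) (sub_mul (svalP a) (svalP b)).
Definition sone : {x | x \in S} := exist _ mone sub_one.
Lemma smulA x y z : smul x (smul y z) = smul (smul x y) z.
Proof. by apply: val_inj; rewrite /= mmulA. Qed.
Lemma smul1m x : smul sone x = x. Proof. by apply: val_inj; rewrite /= mmul1m. Qed.
Lemma smulm1 x : smul x sone = x. Proof. by apply: val_inj; rewrite /= mmulm1. Qed.
Definition subMonoid : finMonoid :=
  @FinMonoid {x | x \in S} smul sone smulA smul1m smulm1.
End SubMonoid.

(** A variety of finite monoids: a class of finite monoids closed under
    finite direct products (the trivial monoid and binary products),
    submonoids, and quotients (homomorphic images). *)
Definition variety (V : finMonoid -> Prop) : Prop :=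
  [/\ V trivMonoid,
      (forall M N : finMonoid, V M -> V N -> V (prodMonoid M N)),
      (forall (M : finMonoid) (S : {set M}) (HS : is_submonoid S),
          V M -> V (subMonoid HS)) &
      (forall (M N : finMonoid) (f : M -> N),
          is_mhom f -> (forall y : N, exists x : M, f x = y) -> V M -> V N)].

Definition leJ (M : finMonoid) (m1 m2 : M) : bool :=
  [exists s : M, exists t : M, m1 == mmul s (mmul m2 t)].

Definition idempotent (M : finMonoid) (e : M) : bool := mmul e e == e.

Definition Me (M : finMonoid) (e : M) : {set M} :=
  [set x | [forall S : {set M},
     (is_submonoid S && [forall m, leJ e m ==> (m \in S)]) ==> (x \in S)]].

Definition eMee (M : finMonoid) (e : M) : {set M} :=
  [set mmul e (mmul s e) | s in Me e].

Section LocalMonoid.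
Variables (M : finMonoid) (e : M) (He : idempotent e).

Lemma Me_sub : is_submonoid (Me e).
Proof.
apply/andP; split.
  by rewrite inE; apply/forallP => S; apply/implyP => /andP [/andP [] ].
apply/forall_inP => x; rewrite inE => /forallP Hx.
apply/forall_inP => y; rewrite inE => /forallP Hy.
rewrite inE; apply/forallP => S; apply/implyP => HS.
have [HS1 _] := andP HS.
have := (implyP (Hx S) HS); have := (implyP (Hy S) HS).
case/andP: HS1 => _ /forall_inP H yS xS.
by move/forall_inP: (H x xS) => /(_ y yS).
Qed.

Lemma e_Me : e \in Me e.
Proof.
rewrite inE; apply/forallP => S; apply/implyP => /andP [_ /forallP H].
apply: (implyP (H e)); apply/existsP; exists mone; apply/existsP; exists mone.
by rewrite mmul1m mmulm1.
Qed.

Lemma eMee_e : e \in eMee e.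
Proof.
apply/imsetP; exists e; first exact: e_Me.
by rewrite !(eqP He).
Qed.

Lemma eMee_mul x y : x \in eMee e -> y \in eMee e -> mmul x y \in eMee e.
Proof.
case/imsetP => s sM -> /imsetP [t tM ->].
apply/imsetP; exists (mmul s (mmul e t)).
  by apply: (sub_mul Me_sub) => //; apply: (sub_mul Me_sub) => //; exact: e_Me.
by rewrite -!mmulA (mmulA e e) (eqP He).
Qed.

Definition lmul (a b : {x | x \in eMee e}) : {x | x \in eMee e} :=
  exist _ (mmul (sval a) (sval b)) (eMee_mul (svalP a) (svalP b)).
Definition lone : {x | x \in eMee e} := exist _ e eMee_e.
Lemma lmulA x y z : lmul x (lmul y z) = lmul (lmul x y) z.
Proof. by apply: val_inj; rewrite /= mmulA. Qed.
Lemma lmul1m x : lmul lone x = x.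
Proof.
apply: val_inj; case: x => x /= /imsetP [s _ ->].
by rewrite !mmulA (eqP He).
Qed.
Lemma lmulm1 x : lmul x lone = x.
Proof.
apply: val_inj; case: x => x /= /imsetP [s _ ->].
by rewrite -!mmulA (eqP He).
Qed.

Definition localMonoid : finMonoid :=
  @FinMonoid {x | x \in eMee e} lmul lone lmulA lmul1m lmulm1.
End LocalMonoid.

Definition MeV (V : finMonoid -> Prop) (M : finMonoid) : Prop :=
  forall (e : M) (He : idempotent e), V (localMonoid He).

(* Main.v *)
Require Import Defs.
From mathcomp Require Import all_boot.
From mathcomp Require Import zify.
Set Implicit Arguments. Unset Strict Implicit. Unset Printing Implicit Defensive.

Section Gen.
Variable M : finMonoid.

Lemma leJP (a b : M) : reflect (exists s t, a = mmul s (mmul b t)) (leJ a b).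
Proof.
apply: (iffP existsP) => [[s /existsP [t /eqP E]]|[s [t E]]]; first by exists s, t.
by exists s; apply/existsP; exists t; rewrite E.
Qed.

Lemma leJ_trans (a b c : M) : leJ a b -> leJ b c -> leJ a c.
Proof.
move=> /leJP [s [t ->]] /leJP [s' [t' ->]]; apply/leJP.
exists (mmul s s'), (mmul t' t); by rewrite -!mmulA.
Qed.

Lemma Me_min (e : M) (S : {set M}) : is_submonoid S ->
  (forall m, leJ e m -> m \in S) -> forall x, x \in Me e -> x \in S.
Proof.
move=> HS Hg x; rewrite inE => /forallP /(_ S) /implyP; apply; rewrite HS /=.
by apply/forallP => m; apply/implyP; exact: Hg.
Qed.

Lemma Me_gen (e m : M) : leJ e m -> m \in Me e.
Proof.
move=> h; rewrite inE; apply/forallP => S; apply/implyP => /andP [_ /forallP H].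
exact: (implyP (H m) h).
Qed.

Lemma Me_one (e : M) : mone \in Me e.
Proof. exact: (sub_one (@Me_sub M e)). Qed.

Lemma Me_mul (e x y : M) : x \in Me e -> y \in Me e -> mmul x y \in Me e.
Proof. exact: (sub_mul (@Me_sub M e)). Qed.

Lemma submonoidI (S : {set M}) : mone \in S ->
  (forall x y, x \in S -> y \in S -> mmul x y \in S) -> is_submonoid S.
Proof.
move=> h1 h2; apply/andP; split=> //; apply/forall_inP => x xS.
by apply/forall_inP => y yS; exact: h2.
Qed.

Definition mpow (a : M) n := iter n (mmul a) mone.

Lemma mpowD a m n : mpow a (m + n) = mmul (mpow a m) (mpow a n).
Proof.
elim: m => [|m IH] /=; first by rewrite mmul1m.
by rewrite /mpow /= -/(mpow a (m + n)) IH mmulA.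
Qed.

Lemma mpowS a n : mpow a n.+1 = mmul a (mpow a n).
Proof. by []. Qed.

Lemma idem_pow (a : M) : exists k, 0 < k /\ Defs.idempotent (mpow a k).
Proof.
pose g := fun i : 'I_#|M|.+1 => mpow a i.+1.
case: (pickP [pred p : 'I_#|M|.+1 * 'I_#|M|.+1 | (p.1 < p.2) && (g p.1 == g p.2)]);
  last first.
  move=> H; have inj : injective g.
    move=> x y E; case: (ltngtP x y) => h.
    - by have := H (x, y); rewrite /= h E eqxx.
    - by have := H (y, x); rewrite /= h E eqxx.
    - exact: val_inj.
  by move: (leq_card g inj); rewrite card_ord ltnn.
move=> [i j] /= /andP [lij /eqP E]; rewrite /g in E.
move: (nat_of_ord i) (nat_of_ord j) lij E => {}i {}j lij E.
set i1 := i.+1; set dd := j - i.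
have hd : mpow a (i1 + dd) = mpow a i1.
  rewrite /i1 /dd E; congr mpow; lia.
have step : forall m, i1 <= m -> mpow a (m + dd) = mpow a m.
  move=> m hm; have -> : m = (m - i1) + i1 by lia.
  by rewrite -addnA !(mpowD a (m - i1)) hd.
have rep : forall c m, i1 <= m -> mpow a (m + c * dd) = mpow a m.
  elim=> [|c IH] m hm; first by rewrite mul0n addn0.
  have -> : m + c.+1 * dd = (m + c * dd) + dd by rewrite mulSn; lia.
  by rewrite step ?IH //; lia.
exists (i1 * dd); split; first by rewrite muln_gt0; apply/andP; split; lia.
by rewrite /Defs.idempotent -mpowD rep //; rewrite leq_pmulr //; lia.
Qed.

End Gen.

Section Var.
Variables (V : finMonoid -> Prop) (HV : variety V).

Lemma var_quo (M N : finMonoid) (f : M -> N) :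
  is_mhom f -> (forall y : N, exists x : M, f x = y) -> V M -> V N.
Proof. by have [_ _ _ Hq] := HV; exact: Hq. Qed.

Lemma var_inj (M N : finMonoid) (g : N -> M) :
  is_mhom g -> injective g -> V M -> V N.
Proof.
move=> [g1 gM] ginj VM.
pose T := [set g y | y in N].
have HT : is_submonoid T.
  apply: submonoidI; first by apply/imsetP; exists mone.
  move=> x y /imsetP [a _ ->] /imsetP [b _ ->]; apply/imsetP; exists (mmul a b) => //.
have VT : V (subMonoid HT) by have [_ _ Hs _] := HV; exact: Hs.
pose h := fun x : subMonoid HT => odflt mone [pick y | g y == val x].
have hP : forall x, g (h x) = val x.
  move=> x; rewrite /h; case: pickP => [y /eqP //|H].
  by case/imsetP: (svalP x) => y _ E; have := H y; rewrite /= E eqxx.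
apply: (var_quo (f := h)) VT; first split.
- by apply: ginj; rewrite hP g1.
- by move=> x y; apply: ginj; rewrite gM !hP.
move=> y.
have yT : g y \in T by apply/imsetP; exists y.
by exists (exist _ (g y) yT); apply: ginj; rewrite hP.
Qed.

End Var.

Section Cases.
Variables (V : finMonoid -> Prop) (HV : variety V).

Lemma case_triv : MeV V trivMonoid.
Proof.
move=> e He.
have [Vt _ _ _] := HV.
apply: (@var_quo V HV trivMonoid (localMonoid He) (fun _ => lone He)) Vt; last first.
  by move=> y; exists tt; apply: val_inj; exact: (etrans (esym (unit_eq _)) (unit_eq _)).
split=> //= x y; apply: val_inj => /=; exact: (etrans (esym (unit_eq _)) (unit_eq _)).
Qed.

Lemma case_sub (M : finMonoid) (S : {set M}) (HS : is_submonoid S) :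
  MeV V M -> MeV V (subMonoid HS).
Proof.
move=> VM e He.
have He' : Defs.idempotent (val e).
  by apply/eqP; move/eqP: He => /(congr1 val) /=.
have MeS : forall s, s \in Me e -> val s \in Me (val e).
  move=> s hs.
  have := @Me_min _ e [set x : subMonoid HS | val x \in Me (val e)] _ _ s hs.
  rewrite inE; apply.
  - apply: submonoidI; first by rewrite inE; exact: Me_one.
    have memS : forall z : subMonoid HS,
      (z \in [set x : subMonoid HS | val x \in Me (val e)]) = (val z \in Me (val e)).
      by move=> z; rewrite in_set.
    by move=> x y; rewrite !memS => hx hy; exact: (Me_mul hx hy).
  - move=> m /leJP [s' [t E]]; rewrite inE; apply: Me_gen; apply/leJP.
    by exists (val s'), (val t); rewrite E.
have P : forall x : localMonoid He, val (val x) \in eMee (val e).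
  by move=> [x /= /imsetP [s hs ->]]; apply/imsetP; exists (val s); [exact: MeS|].
pose g := fun x : localMonoid He =>
  (exist (fun y => y \in eMee (val e)) (val (val x)) (P x) : localMonoid He').
apply: (@var_inj V HV (localMonoid He') (localMonoid He) g) (VM _ He').
- by split; [exact: val_inj | move=> x y; exact: val_inj].
- by move=> x y /(congr1 val) /= /val_inj; exact: val_inj.
Qed.

Lemma case_prod (M N : finMonoid) :
  MeV V M -> MeV V N -> MeV V (prodMonoid M N).
Proof.
move=> VM VN e He.
have He1 : Defs.idempotent e.1 by apply/eqP; move/eqP: He => /(congr1 fst) /=.
have He2 : Defs.idempotent e.2 by apply/eqP; move/eqP: He => /(congr1 snd) /=.
have Me_prod : forall z : prodMonoid M N, z \in Me e ->
    (z.1 \in Me e.1) && (z.2 \in Me e.2).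
  move=> z hz.
  have memS : forall w : prodMonoid M N,
      (w \in [set w : prodMonoid M N | (w.1 \in Me e.1) && (w.2 \in Me e.2)])
      = (w.1 \in Me e.1) && (w.2 \in Me e.2) by move=> w; rewrite in_set.
  have := @Me_min _ e [set w : prodMonoid M N | (w.1 \in Me e.1) && (w.2 \in Me e.2)] _ _ z hz.
  rewrite memS; apply.
  - apply: submonoidI; first by rewrite memS /= !Me_one.
    move=> x y; rewrite !memS => /andP [hx1 hx2] /andP [hy1 hy2].
    by apply/andP; split; apply: Me_mul.
  - move=> m /leJP [s [t E]]; rewrite memS; apply/andP; split; apply: Me_gen;
      apply/leJP; [exists s.1, t.1 | exists s.2, t.2]; by rewrite E.
have Me_prod2 : forall z1 z2, z1 \in Me e.1 -> z2 \in Me e.2 ->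
    ((z1, z2) : prodMonoid M N) \in Me e.
  move=> z1 z2 h1 h2.
  have -> : ((z1, z2) : prodMonoid M N) =
      mmul ((z1, mone) : prodMonoid M N) ((mone, z2) : prodMonoid M N).
    by rewrite /= /pmul /= mmulm1 mmul1m.
  apply: Me_mul.
  - have memS : forall x : M, (x \in [set x : M | ((x, mone) : prodMonoid M N) \in Me e])
        = (((x, mone) : prodMonoid M N) \in Me e) by move=> x; rewrite in_set.
    have := @Me_min _ e.1 [set x : M | ((x, mone) : prodMonoid M N) \in Me e] _ _ z1 h1.
    rewrite memS; apply.
    + apply: submonoidI; first by rewrite memS; exact: Me_one.
      move=> x y; rewrite !memS => hx hy; have := Me_mul hx hy.
      by rewrite /= /pmul /= mmul1m.
    + move=> m /leJP [s [t E]]; rewrite memS; apply: Me_gen; apply/leJP.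
      exists ((s, e.2) : prodMonoid M N), ((t, mone) : prodMonoid M N).
      rewrite /= /pmul /= mmul1m mmulm1 -E; exact: surjective_pairing.
  - have memS : forall x : N, (x \in [set x : N | ((mone, x) : prodMonoid M N) \in Me e])
        = (((mone, x) : prodMonoid M N) \in Me e) by move=> x; rewrite in_set.
    have := @Me_min _ e.2 [set x : N | ((mone, x) : prodMonoid M N) \in Me e] _ _ z2 h2.
    rewrite memS; apply.
    + apply: submonoidI; first by rewrite memS; exact: Me_one.
      move=> x y; rewrite !memS => hx hy; have := Me_mul hx hy.
      by rewrite /= /pmul /= mmul1m.
    + move=> m /leJP [s [t E]]; rewrite memS; apply: Me_gen; apply/leJP.
      exists ((e.1, s) : prodMonoid M N), ((mone, t) : prodMonoid M N).
      rewrite /= /pmul /= mmul1m mmulm1 -E; exact: surjective_pairing.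
have P : forall z : prodMonoid (localMonoid He1) (localMonoid He2),
    ((val z.1, val z.2) : prodMonoid M N) \in eMee e.
  move=> z; have := svalP z.1; case/imsetP => s hs E1.
  have := svalP z.2; case/imsetP => t ht E2.
  apply/imsetP; exists ((s, t) : prodMonoid M N); first exact: Me_prod2.
  by rewrite -[val z.1]/(sval z.1) -[val z.2]/(sval z.2) E1 E2.
pose h := fun z : prodMonoid (localMonoid He1) (localMonoid He2) =>
  (exist (fun y => y \in eMee e) ((val z.1, val z.2) : prodMonoid M N) (P z)
    : localMonoid He).
apply: (@var_quo V HV (prodMonoid (localMonoid He1) (localMonoid He2))
   (localMonoid He) h).
- split; first by apply: val_inj; rewrite /=; exact: esym (surjective_pairing _).
  by move=> x y; apply: val_inj.
- move=> y; have := svalP y; case/imsetP => w hw E.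
  have /andP [h1 h2] := Me_prod w hw.
  have m1 : mmul e.1 (mmul w.1 e.1) \in eMee e.1 by apply/imsetP; exists w.1.
  have m2 : mmul e.2 (mmul w.2 e.2) \in eMee e.2 by apply/imsetP; exists w.2.
  exists ((exist (fun x => x \in eMee e.1) _ m1 : localMonoid He1),
          (exist (fun x => x \in eMee e.2) _ m2 : localMonoid He2)).
  by apply: val_inj; rewrite /= -[val y]/(sval y) E.
- by have [_ Hp _ _] := HV; exact: Hp (VM _ He1) (VN _ He2).
Qed.

Lemma case_quo (M N : finMonoid) (f : M -> N) :
  is_mhom f -> (forall y : N, exists x : M, f x = y) -> MeV V M -> MeV V N.
Proof.
move=> [f1 fM] fsurj VM e' He'.
have ee' : mmul e' e' = e' by exact: (eqP He').
have [x0 fx0] := fsurj e'.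
pose T := [set x | f x == e'].
pose p := foldr mmul x0 (enum T).
have fp : f p = e'.
  rewrite /p; have : all (mem T) (enum T) by apply/allP => x; rewrite mem_enum.
  elim: (enum T) => [|y s IH] //= /andP [hy hs].
  by rewrite fM IH //; rewrite inE in hy; rewrite (eqP hy).
have pJ : forall x, f x = e' -> leJ p x.
  move=> x fx; have : x \in enum T by rewrite mem_enum inE fx.
  rewrite /p; elim: (enum T) => [|y s IH] //=; rewrite in_cons => /orP [/eqP ->|hx].
  - by apply/leJP; exists mone, (foldr mmul x0 s); rewrite mmul1m.
  - apply: leJ_trans (IH hx); apply/leJP; exists y, mone; by rewrite mmulm1.
have [k [k0 Hk]] := idem_pow p.
have fpow : forall n, f (mpow p n.+1) = e'.
  elim=> [|n IH]; rewrite mpowS fM; first by rewrite /mpow /= f1 mmulm1.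
  by rewrite IH fp.
have fe : f (mpow p k) = e' by case: k k0 {Hk} => // k' _; exact: fpow.
have eJ : forall x, f x = e' -> leJ (mpow p k) x.
  move=> x fx; apply: leJ_trans (pJ x fx); case: k k0 {Hk fe} => // k' _.
  by apply/leJP; exists mone, (mpow p k'); rewrite mmul1m.
move: Hk fe eJ; set e := mpow p k => He fe eJ.
have MeF : forall m, m \in Me e -> f m \in Me e'.
  move=> m hm.
  have memS : forall x, (x \in [set x | f x \in Me e']) = (f x \in Me e')
    by move=> x; rewrite in_set.
  have := @Me_min _ e [set x | f x \in Me e'] _ _ m hm; rewrite memS; apply.
  - apply: submonoidI; first by rewrite memS f1; exact: Me_one.
    by move=> x y; rewrite !memS fM; exact: Me_mul.
  - move=> n /leJP [s [t E]]; rewrite memS; apply: Me_gen; apply/leJP.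
    by exists (f s), (f t); rewrite -!fM -E fe.
have MeF2 : forall n, n \in Me e' -> exists2 m, m \in Me e & f m = n.
  move=> n hn.
  have HR : is_submonoid (f @: Me e).
    apply: submonoidI; first by apply/imsetP; exists mone; [exact: Me_one|].
    move=> x y /imsetP [a ha ->] /imsetP [b hb ->]; apply/imsetP.
    by exists (mmul a b); [exact: Me_mul | rewrite fM].
  suff /imsetP [m hm ->] : n \in f @: Me e by exists m.
  apply: (@Me_min _ e' (f @: Me e) HR _ n hn).
  move=> n' /leJP [s [t E]].
  have [s' fs] := fsurj s; have [m fm] := fsurj n'; have [t' ft] := fsurj t.
  have fx : f (mmul s' (mmul m t')) = e' by rewrite !fM fs fm ft.
  apply/imsetP; exists m => //; apply: Me_gen; apply: leJ_trans (eJ _ fx) _.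
  by apply/leJP; exists s', t'.
have P : forall x : localMonoid He, f (val x) \in eMee e'.
  move=> x; have := svalP x; case/imsetP => s hs E.
  apply/imsetP; exists (f s); first exact: MeF.
  by rewrite -[val x]/(sval x) E !fM fe.
pose g := fun x : localMonoid He =>
  (exist (fun y => y \in eMee e') (f (val x)) (P x) : localMonoid He').
apply: (@var_quo V HV (localMonoid He) (localMonoid He') g) (VM _ He).
- split; first by apply: val_inj; rewrite /= fe.
  by move=> x y; apply: val_inj; rewrite /= fM.
- move=> y; have := svalP y; case/imsetP => n hn E.
  have [m hm fm] := MeF2 n hn.
  have mm : mmul e (mmul m e) \in eMee e by apply/imsetP; exists m.
  exists (exist (fun x => x \in eMee e) _ mm); apply: val_inj.
  by rewrite /= -[val y]/(sval y) E !fM fe fm.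
Qed.

End Cases.

Theorem proposition5 (V : finMonoid -> Prop) :
  variety V -> variety (MeV V).
Proof.
move=> HV; split.
- exact: case_triv.
- by move=> M N; exact: case_prod.
- by move=> M S HS; exact: case_sub.
- by move=> M N f; exact: case_quo.
Qed.
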